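(* Let $v^1,\dots,v^p\in\mathbb{R}^n$ and let $\mathscr V\subset\mathbb{R}_{\max}^n$ be the max-plus cone they generate. If $y\in\mathbb{R}_{\max}^n$ does not belong to $\mathscr V$, then there exist disjoint sets $I,J$ with $I\cup J=\{1,\dots,n\}$ and $a\in\mathbb{R}^n$ such that the half-space $\{x\in\mathbb{R}_{\max}^n:\bigoplus_{i\in I}a_ix_i\le\bigoplus_{j\in J}a_jx_j\}$ contains $\mathscr V$ but not $y$, and its apex $-a$ is a vertex of the natural cell decomposition of $\mathbb{R}_{\max}^n$ induced by $v^1,\dots,v^p$.
   Context: $\mathbb{R}_{\max}=\mathbb{R}\cup\{-\infty\}$ with $a\oplus b=\max(a,b)$, $ab=a+b$; the max-plus cone generated by $v^1,\dots,v^p$ is $\{\bigoplus_r\lambda_rv^r:\lambda_r\in\mathbb{R}_{\max}\}$, where $(\lambda v)_k=\lambda+v_k$. The apex of the half-space $\{x:\bigoplus_{i\in I}a_ix_i\le\bigoplus_{j\in J}a_jx_j\}$ (with $I,J$ a partition of $\{1,\dots,n\}$ and $a\in\mathbb{R}^n$) is $-a$. For $x\in\mathbb{R}^n$, the type of $x$ is $(S_1(x),\dots,S_n(x))$ with $S_j(x)=\{r: v^r_j-x_j=\max_{k}(v^r_k-x_k)\}$. For an $n$-tuple $S=(S_1,\dots,S_n)$ of subsets of $\{1,\dots,p\}$, the cell $X_S=\{x: S_j\subset S_j(x)\ \forall j\}$; the natural cell decomposition is the collection of cells $X_S$, $S$ ranging over types. A vertex of this decomposition is a vector $x\in\mathbb{R}^n$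 whose cell $X_{\mathrm{type}(x)}$ is one-dimensional, i.e. equals $\{\lambda+x:\lambda\in\mathbb{R}\}$ (equivalently, the graph on $\{1,\dots,n\}$ with an edge $\{i,j\}$ whenever $S_i(x)\cap S_j(x)\neq\emptyset$ is connected). *)

(* Defs.v *)
From mathcomp Require Import all_boot all_order all_algebra.
From mathcomp Require Import reals.
Set Implicit Arguments. Unset Strict Implicit. Unset Printing Implicit Defensive.
Import Order.TTheory GRing.Theory Num.Theory.
Local Open Scope ring_scope.

(* R_max = R u {-oo}, encoded as option R with None = -oo. *)
Definition rmax (R : realType) := option R.

Definition madd (R : realType) (a b : rmax R) : rmax R :=
  match a, b with
  | None, _ => b
  | _, None => a
  | Some x, Some y => Some (Num.max x y)
  end.

Definition mmul (R : realType) (a b : rmax R) : rmax R :=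
  match a, b with
  | Some x, Some y => Some (x + y)
  | _, _ => None
  end.

Definition mle (R : realType) (a b : rmax R) : Prop :=
  match a, b with
  | None, _ => True
  | Some _, None => False
  | Some x, Some y => x <= y
  end.

Definition in_cone (R : realType) (n p : nat) (v : 'I_p -> 'I_n -> R)
    (x : 'I_n -> rmax R) : Prop :=
  exists lam : 'I_p -> rmax R,
    forall k : 'I_n, x k = \big[@madd R/None]_(r < p) mmul (lam r) (Some (v r k)).

Definition in_halfspace (R : realType) (n : nat) (I J : {set 'I_n})
    (a : 'I_n -> R) (x : 'I_n -> rmax R) : Prop :=
  mle (\big[@madd R/None]_(i in I) mmul (Some (a i)) (x i))
      (\big[@madd R/None]_(j in J) mmul (Some (a j)) (x j)).

Definition type_set (R : realType) (n p : nat) (v : 'I_p -> 'I_n -> R)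
    (x : 'I_n -> R) (j : 'I_n) : {set 'I_p} :=
  [set r : 'I_p | [forall k : 'I_n, v r k - x k <= v r j - x j]].

Definition in_cell (R : realType) (n p : nat) (v : 'I_p -> 'I_n -> R)
    (S : 'I_n -> {set 'I_p}) (x : 'I_n -> R) : Prop :=
  forall j : 'I_n, S j \subset type_set v x j.

Definition is_vertex (R : realType) (n p : nat) (v : 'I_p -> 'I_n -> R)
    (x : 'I_n -> R) : Prop :=
  forall z : 'I_n -> R,
    in_cell v (type_set v x) z <-> exists lam : R, forall k, z k = lam + x k.

(* Main.v *)
From HB Require Import structures.
Require Import Defs.
From mathcomp Require Import all_boot all_order all_algebra.
From mathcomp Require Import reals.
From mathcomp Require Import lra.
Import Order.TTheory GRing.Theory Num.Theory.
Set Implicit Arguments. Unset Strict Implicit. Unset Printing Implicit Defensive.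
Local Open Scope ring_scope.

Lemma maddA (R : realType) : associative (@madd R).
Proof. by case=> [a|] [b|] [c|] //=; rewrite maxA. Qed.
Lemma maddC (R : realType) : commutative (@madd R).
Proof. by case=> [a|] [b|] //=; rewrite maxC. Qed.
Lemma madd0l (R : realType) : left_id None (@madd R).
Proof. by []. Qed.
HB.instance Definition _ (R : realType) :=
  Monoid.isComLaw.Build (rmax R) None (@madd R) (@maddA R) (@maddC R) (@madd0l R).

Lemma mle_trans (R : realType) (a b c : rmax R) : mle a b -> mle b c -> mle a c.
Proof. by case: a b c => [a|] [b|] [c|] //=; apply: le_trans. Qed.
Lemma mle_refl (R : realType) (a : rmax R) : mle a a.
Proof. by case: a => [a|] //=. Qed.
Lemma madd_le (R : realType) (a b c : rmax R) : mle (madd a b) c <-> mle a c /\ mle b c.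
Proof.
case: a b c => [a|] [b|] [c|] //=; try tauto.
by rewrite ge_max; split => [/andP[]|[-> ->]].
Qed.
Lemma big_le (R : realType) (n : nat) (P : pred 'I_n) (F : 'I_n -> rmax R) b :
  mle (\big[@madd R/None]_(i | P i) F i) b <-> (forall i, P i -> mle (F i) b).
Proof.
split.
  move=> H i Pi; move: H; rewrite (bigD1 i) //= => /madd_le[]//.
elim/big_rec: _ => [|i x Pi IH] H; first by [].
by apply/madd_le; split; [apply: H | apply: IH].
Qed.
Lemma le_big (R : realType) (n : nat) (P : pred 'I_n) (F : 'I_n -> rmax R) i :
  P i -> mle (F i) (\big[@madd R/None]_(i | P i) F i).
Proof.
move=> Pi; have := (proj1 (@big_le R n P F (\big[@madd R/None]_(i | P i) F i))).
by apply => //; apply: mle_refl.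
Qed.
Lemma big_attain (R : realType) (n : nat) (P : pred 'I_n) (F : 'I_n -> rmax R) :
  \big[@madd R/None]_(i | P i) F i = None \/
  exists2 i, P i & \big[@madd R/None]_(i | P i) F i = F i.
Proof.
elim/big_rec: _ => [|i x Pi IH]; first by left.
right; case: IH => [->|[j Pj ->]]; first by exists i => //; case: (F i).
case Ei: (F i) => [a|]; case Ej: (F j) => [b|] /=; try by [exists i|exists j].
case: (leP a b) => _; [exists j|exists i] => //.
Qed.
Lemma mmul_madd (R : realType) (s : R) a b :
  mmul (Some s) (@madd R a b) = madd (mmul (Some s) a) (mmul (Some s) b).
Proof. by case: a b => [a|] [b|] //=; rewrite addr_maxr. Qed.

Lemma exmax (R : realType) (T : finType) (P : pred T) (f : T -> R) :
  (exists x, P x) -> exists x, P x /\ forall y, P y -> f y <= f x.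
Proof. case=> x0 Px0; case: (arg_maxP f Px0) => x Px H; by exists x. Qed.

Lemma exmin (R : realType) (T : finType) (P : pred T) (f : T -> R) :
  (exists x, P x) -> exists x, P x /\ forall y, P y -> f x <= f y.
Proof. case=> x0 Px0; case: (arg_minP f Px0) => x Px H; by exists x. Qed.

Lemma in_type (R : realType) n p (v : 'I_p -> 'I_n -> R) c r j :
  r \in type_set v c j <-> forall k, v r k - c k <= v r j - c j.
Proof. by rewrite inE; split => [/forallP|H]; last apply/forallP. Qed.

Definition block (R : realType) n p (v : 'I_p -> 'I_n -> R) c (C : {set 'I_n}) :=
  forall r j k, j \in C -> k \notin C -> r \in type_set v c j -> r \in type_set v c k -> False.

Lemma vertex_of_noblock (R : realType) n p (v : 'I_p -> 'I_n -> R) c :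
  (forall C, block v c C -> C = set0 \/ C = setT) -> is_vertex v c.
Proof.
move=> Hb z; split; last first.
  case=> lam Hz j; apply/subsetP => r /in_type H; apply/in_type => k.
  rewrite !Hz; have := H k; lra.
move=> Hc.
case: n v c Hb z Hc => [|n] v c Hb z Hc; first by exists 0 => -[].
pose d k := z k - c k.
have [m [_ Hm]] := @exmax R _ predT d (ex_intro _ ord0 isT).
pose C := [set k | d k == d m].
have bC : block v c C.
  move=> r j k jC kC rj rk; move: jC kC; rewrite !inE => /eqP dj dk.
  have /subsetP/(_ r rj)/in_type zj := Hc j.
  have /subsetP/(_ r rk)/in_type zk := Hc k.
  move/in_type: rj => rj; move/in_type: rk => rk.
  have e1 := rj k; have e2 := rk j; have e3 := zj k; have e4 := zk j.
  move: dk; rewrite /d in dj *; apply/negP; rewrite negbK; apply/eqP; lra.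
case: (Hb C bC) => HC.
  by have := in_set0 m; rewrite -HC inE eqxx.
exists (d m) => k; have : k \in C by rewrite HC inE.
rewrite inE /d => /eqP; lra.
Qed.

Definition Aset (R : realType) n (y : 'I_n -> rmax R) (c : 'I_n -> R) : {set 'I_n} :=
  [set k | if y k is Some a then
     [forall k', if y k' is Some b then b - c k' <= a - c k else true] else false].

Lemma inA (R : realType) n (y : 'I_n -> rmax R) c k :
  k \in Aset y c <-> exists a, y k = Some a /\
     forall k' b, y k' = Some b -> b - c k' <= a - c k.
Proof.
rewrite inE; case E: (y k) => [a|]; last by split => // -[a []].
split.
  move/forallP => H; exists a; split => // k' b E'.
  by have := H k'; rewrite E'.
case=> _ [[<-] H]; apply/forallP => k'; case E': (y k') => [b|] //.
exact: H E'.
Qed.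

Definition Good (R : realType) n p (v : 'I_p -> 'I_n -> R) (y : 'I_n -> rmax R) c :=
  forall r, exists k, r \in type_set v c k /\ k \notin Aset y c.

Definition Ncnt (R : realType) n p (v : 'I_p -> 'I_n -> R) c :=
  #|[set rk : 'I_p * 'I_n | rk.1 \in type_set v c rk.2]|.

Lemma move_step (R : realType) n p (v : 'I_p -> 'I_n -> R) (y : 'I_n -> rmax R) c C :
  Good v y c -> block v c C -> (exists k1, k1 \in C) ->
  (exists r0, forall k, k \in C -> r0 \notin type_set v c k) ->
  ((exists a, a \in C /\ a \in Aset y c) \/
   (forall r k, k \in C -> r \notin type_set v c k)) ->
  exists c', Good v y c' /\ (Ncnt v c < Ncnt v c')%N.
Proof.
move=> Gc bC [k0 k0C] [r0 Hr0] ok.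
have [mx Hmx] : exists mx : 'I_p -> 'I_n,
    forall r k, v r k - c k <= v r (mx r) - c (mx r).
  have H : forall r, exists x, forall k, v r k - c k <= v r x - c x.
    move=> r.
    have [x [_ Hx]] := @exmax R _ predT (fun k => v r k - c k) (ex_intro _ k0 isT).
    by exists x => k; apply: Hx.
  by case/fin_all_exists: H => mx Hmx; exists mx.
pose Q : pred ('I_p * 'I_n) := fun rk =>
  [forall k, (k \in C) ==> (rk.1 \notin type_set v c k)] && (rk.2 \in C).
pose g (rk : 'I_p * 'I_n) :=
  (v rk.1 (mx rk.1) - c (mx rk.1)) - (v rk.1 rk.2 - c rk.2).
have [[r1 k1] [Q1 Hg]] : exists x, Q x /\ forall y, Q y -> g x <= g y.
  apply: exmin; exists (r0, k0); rewrite /Q /= k0C andbT.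
  by apply/forallP => k; apply/implyP; apply: Hr0.
move: Q1; rewrite /Q /= => /andP[/forallP Hr1 k1C].
have Hr1' : forall k, k \in C -> r1 \notin type_set v c k.
  by move=> k kC; have /implyP := Hr1 k; apply.
pose t := g (r1, k1).
have tpos : 0 < t.
  have := Hr1' k1 k1C; rewrite inE => /forallPn [k]; rewrite -ltNge => Hk.
  have := Hmx r1 k; rewrite /t /g /=; lra.
have gQ : forall r k, k \in C -> (forall j, j \in C -> r \notin type_set v c j) ->
   t <= g (r, k).
  move=> r k kC H; apply: Hg; rewrite /Q /= kC andbT.
  by apply/forallP => j; apply/implyP; apply: H.
pose c' k := if k \in C then c k - t else c k.
have sub : forall r j, r \in type_set v c j -> r \in type_set v c' j.
  move=> r j /[dup] rj /in_type H; apply/in_type => k; rewrite /c'.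
  case: ifP => kC; case: ifP => jC; have := H k; try lra.
  have Hout : forall i, i \in C -> r \notin type_set v c i.
    move=> i iC; apply/negP => ri; apply: (bC r i j iC); by [rewrite jC|].
  have := gQ r k kC Hout; rewrite /g /=.
  have := Hmx r j; have := H (mx r); lra.
have new1 : r1 \in type_set v c' k1.
  apply/in_type => k; rewrite /c' k1C.
  case: ifP => kC.
    have := gQ r1 k kC Hr1'; rewrite /g /t /g /=; lra.
  have := Hmx r1 k; rewrite /t /g /=; lra.
exists c'; split.
  move=> r; have [k [rk kA]] := Gc r; exists k; split; first exact: sub.
  apply/negP => /inA [a [Ek Ha]]; move/negP: kA; apply; apply/inA.
  exists a; split => // k' b E'.
  case: ok => [[a0 [a0C /inA [b0 [E0 H0]]]]|Hall].
    have h1 := Ha a0 b0 E0; have h2 := H0 k' b E'; have h3 := H0 k a Ek.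
    move: h1; rewrite /c' a0C; case: ifP => kC; lra.
  have kC : k \notin C by apply/negP => kC; move: (Hall r k kC); rewrite rk.
  have := Ha k' b E'; rewrite /c' (negbTE kC); case: ifP => _; lra.
have E : forall c0 r j, ((r, j) \in [set rk : 'I_p * 'I_n | rk.1 \in type_set v c0 rk.2])
   = (r \in type_set v c0 j) by move=> *; rewrite in_set.
apply: proper_card; apply/properP; split.
  by apply/subsetP => -[r j]; rewrite !E; exact: sub.
exists (r1, k1); rewrite !E //.
exact: Hr1'.
Qed.

From Stdlib Require Import Classical.
From mathcomp Require Import zify.

Lemma Ncnt_le (R : realType) n p (v : 'I_p -> 'I_n -> R) c : (Ncnt v c <= p * n)%N.
Proof. by rewrite /Ncnt; apply: (leq_trans (max_card _)); rewrite card_prod !card_ord. Qed.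

Lemma A_nonempty (R : realType) n (y : 'I_n -> rmax R) c :
  (exists k a, y k = Some a) -> exists k, k \in Aset y c.
Proof.
case=> k0 [a0 E0].
have Pk0 : y k0 != None by rewrite E0.
have [k [Pk Hk]] := @exmax R _ (fun k => y k != None) (fun k => odflt 0 (y k) - c k)
   (ex_intro _ k0 Pk0).
exists k; apply/inA; move: Pk; case Ek: (y k) => [a|] // _.
exists a; split => // k' b E'.
have Pk' : y k' != None by rewrite E'.
by have := Hk k' Pk'; rewrite /= E' Ek.
Qed.

Lemma step_lemma (R : realType) n p (v : 'I_p -> 'I_n -> R) (y : 'I_n -> rmax R) c :
  (0 < p)%N -> (exists k a, y k = Some a) -> Good v y c ->
  is_vertex v c \/ exists c', Good v y c' /\ (Ncnt v c < Ncnt v c')%N.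
Proof.
move=> hp yfin Gc.
case: (classic (forall C, block v c C -> C = set0 \/ C = setT)) => [Hb|Hb].
  by left; apply: vertex_of_noblock.
right.
have [C HC] := not_all_ex_not _ _ Hb.
have [bC HC'] := imply_to_and _ _ HC.
have [C0 CT] := not_or_and _ _ HC'.
have [k1 k1C] : exists k, k \in C by apply/set0Pn; apply/eqP.
have [k2 k2C] : exists k, k \in ~: C.
  apply: NNPP => H; apply: CT; apply/setP => k; rewrite inE.
  apply: NNPP => kC; apply: H; exists k; rewrite inE; exact/negP.
have bC' : block v c (~: C).
  move=> r j k; rewrite !in_setC negbK => jC kC rj rk; exact: (bC r k j kC jC rk rj).
have [a aA] := A_nonempty c yfin.
case: (boolP [forall r, forall k, (k \in C) ==> (r \notin type_set v c k)]) => [/forallP H1|/forallPn [r1 /forallPn [j1]]].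
  apply: (move_step Gc bC); first by exists k1.
    exists (Ordinal hp) => k kC; have /forallP/(_ k)/implyP := H1 (Ordinal hp); apply => //.
  right => r k kC; have /forallP/(_ k)/implyP := H1 r; apply => //.
rewrite negb_imply negbK => /andP [j1C r1j1].
case: (boolP [forall r, forall k, (k \in ~: C) ==> (r \notin type_set v c k)]) => [/forallP H1|/forallPn [r2 /forallPn [j2]]].
  apply: (move_step Gc bC'); first by exists k2.
    exists (Ordinal hp) => k kC; have /forallP/(_ k)/implyP := H1 (Ordinal hp); apply => //.
  right => r k kC; have /forallP/(_ k)/implyP := H1 r; apply => //.
rewrite negb_imply negbK => /andP [j2C r2j2].
case: (boolP (a \in C)) => aC.
  apply: (move_step Gc bC); first by exists k1.
    exists r2 => k kC; apply/negP => r2k; apply: (bC r2 k j2) => //.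
    by rewrite in_setC in j2C.
  by left; exists a.
apply: (move_step Gc bC'); first by exists k2.
  exists r1 => k kC; apply/negP => r1k; apply: (bC r1 j1 k) => //.
  by rewrite in_setC in kC.
by left; exists a; rewrite in_setC aC.
Qed.

Lemma reach_vertex (R : realType) n p (v : 'I_p -> 'I_n -> R) (y : 'I_n -> rmax R) :
  (0 < p)%N -> (exists k a, y k = Some a) ->
  forall m c, Good v y c -> (p * n - Ncnt v c <= m)%N ->
  exists c', Good v y c' /\ is_vertex v c'.
Proof.
move=> hp yfin; elim=> [|m IH] c Gc Hm.
all: case: (step_lemma hp yfin Gc) => [Hv|[c' [Gc' Hlt]]]; first by exists c.
  have := Ncnt_le v c'; lia.
apply: (IH c' Gc'); lia.
Qed.

From Stdlib Require Import FunctionalExtensionality.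

Lemma mmul_mono (R : realType) (s : R) (a b : rmax R) :
  mle a b -> mle (mmul (Some s) a) (mmul (Some s) b).
Proof. by case: a b => [a|] [b|] //= H; rewrite lerD2l. Qed.

Lemma halfspace_ok (R : realType) n p (v : 'I_p -> 'I_n -> R) (y : 'I_n -> rmax R) c :
  Good v y c -> forall x, in_cone v x ->
  in_halfspace (Aset y c) (~: Aset y c) (fun k => - c k) x.
Proof.
move=> Gc x [lam Hx]; rewrite /in_halfspace.
apply/big_le => i iI; rewrite (Hx i).
rewrite (big_morph (mmul (Some (- c i))) (@mmul_madd R (- c i)) (erefl : mmul (Some (- c i)) None = None)).
apply/big_le => r _.
case El: (lam r) => [l|]; last by [].
have [j [rj jI]] := Gc r.
apply: (mle_trans (b := (mmul (Some (- c j)) (x j)))); last first.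
  by apply: (@le_big R n (fun j => j \in ~: Aset y c) (fun j => mmul (Some (- c j)) (x j))); rewrite in_setC.
apply: (mle_trans (b := (mmul (Some (- c j)) (Some (l + v r j))))); last first.
  apply: mmul_mono; rewrite (Hx j).
  have := @le_big R p (fun _ => true) (fun r => mmul (lam r) (Some (v r j))) r isT.
  by rewrite El.
move/in_type: rj => /(_ i) /=; lra.
Qed.

Lemma halfspace_y (R : realType) n (y : 'I_n -> rmax R) c :
  (exists k a, y k = Some a) ->
  ~ in_halfspace (Aset y c) (~: Aset y c) (fun k => - c k) y.
Proof.
move=> yfin H.
have [i0 /[dup] i0A /inA [b0 [E0 H0]]] := A_nonempty c yfin.
have H1 := @le_big R n (fun i => i \in Aset y c) (fun i => mmul (Some (- c i)) (y i)) i0 i0A.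
have H2 := mle_trans H1 H; rewrite E0 /= in H2.
case: (big_attain (fun j => j \in ~: Aset y c) (fun j => mmul (Some (- c j)) (y j))) => [E|[j jJ E]];
  rewrite E in H2 => //.
move: jJ H2; rewrite in_setC; case Ej: (y j) => [b|] //= jA H2.
move/negP: jA; apply; apply/inA; exists b; split => // k' b' E'.
have := H0 k' b' E'; lra.
Qed.

Lemma yfin_of (R : realType) n p (v : 'I_p -> 'I_n -> R) (y : 'I_n -> rmax R) :
  ~ in_cone v y -> exists k a, y k = Some a.
Proof.
move=> Hy; apply: NNPP => H; apply: Hy; exists (fun _ => None) => k.
rewrite big1 //; case E: (y k) => [a|] //; exfalso; apply: H; by exists k, a.
Qed.

Lemma start_good (R : realType) n p (v : 'I_p -> 'I_n -> R) (y : 'I_n -> rmax R) :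
  (0 < p)%N -> ~ in_cone v y -> exists c, Good v y c.
Proof.
move=> hp Hy; have [k0 [a0 E0]] := yfin_of Hy.
pose r0 := Ordinal hp.
case: (classic (exists k, y k = None)) => [[kn En]|Hn].
  have [[[r1 i1] j1] [_ HD]] := @exmax R _ predT
     (fun t : 'I_p * 'I_n * 'I_n => v t.1.1 t.2 - v t.1.1 t.1.2) (ex_intro _ (r0, k0, k0) isT).
  pose M := v r1 j1 - v r1 i1 + 1.
  pose c k := if y k is None then - M else 0.
  exists c => r.
  have [mx [_ Hmx]] := @exmax R _ predT (fun k => v r k - c k) (ex_intro _ k0 isT).
  exists mx; split; first by apply/in_type => k; apply: Hmx.
  apply/negP => /inA [a [Ea _]].
  have h1 := Hmx kn isT; have h2 := HD (r, kn, mx) isT.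
  move: h1 h2; rewrite /c /= Ea En /M; lra.
have yS : forall k, y k = Some (odflt 0 (y k)).
  by move=> k; case E: (y k) => [a|] //; exfalso; apply: Hn; exists k.
pose yk k := odflt 0 (y k).
have [am Ham] : exists am : 'I_p -> 'I_n,
    forall r k, yk (am r) - v r (am r) <= yk k - v r k.
  have H : forall r, exists x, forall k, yk x - v r x <= yk k - v r k.
    move=> r.
    have [x [_ Hx]] := @exmin R _ predT (fun k => yk k - v r k) (ex_intro _ k0 isT).
    by exists x => k; apply: Hx.
  by case/fin_all_exists: H => am Ham; exists am.
pose lam r := yk (am r) - v r (am r).
pose Px k := \big[@madd R/None]_(r < p) mmul (Some (lam r)) (Some (v r k)).
pose c k := odflt 0 (Px k).
have P1 : forall r k, mle (Some (lam r + v r k)) (Some (c k)) /\ Px k = Some (c k).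
  move=> r k.
  have := @le_big R p (fun _ => true) (fun r => mmul (Some (lam r)) (Some (v r k))) r isT.
  rewrite -/(Px k) /c; case: (Px k) => [b|] //=.
have P2 : forall k, c k <= yk k.
  move=> k; have [_ E] := P1 r0 k.
  have : mle (Px k) (Some (yk k)).
    apply/big_le => r _ /=; have := Ham r k; rewrite /lam; lra.
  by rewrite E.
have P3 : exists k, c k < yk k.
  apply: NNPP => H; apply: Hy; exists (fun r => Some (lam r)) => k.
  have [_ E] := P1 r0 k; rewrite -/(Px k) E yS /yk.
  congr Some; apply/eqP; rewrite eq_le P2 /= leNgt; apply/negP => Hlt.
  apply: H; exists k; apply: NNPP => h; apply: Hlt; rewrite andbT; exact/negP.
exists c => r; exists (am r); split.
  apply/in_type => k.
  have [h1 _] := P1 r k; have [h2 _] := P1 r (am r); have h3 := P2 (am r).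
  move: h1 h2 h3 => /= h1 h2 h3; rewrite /lam in h1 h2; lra.
apply/negP => /inA [a [Ea Ha]].
have [k Hk] := P3.
have := Ha k (yk k) (yS k).
have [h2 _] := P1 r (am r); have h3 := P2 (am r).
have ea : yk (am r) = a by rewrite /yk Ea.
move: h2 h3 Hk; rewrite /= /lam ea => h2 h3 Hk h4.
clear -Hk h4 h2 h3.
move: (yk k) (c k) (c (am r)) (v r (am r)) Hk h4 h2 h3 => A B C D.
lra.
Qed.

Theorem proposition4p6 (R : realType) (n p : nat) (v : 'I_p -> 'I_n -> R)
    (y : 'I_n -> rmax R) (hp : (0 < p)%N) :
  ~ in_cone v y ->
  exists (I J : {set 'I_n}) (a : 'I_n -> R),
    [disjoint I & J] /\ I :|: J = [set: 'I_n] /\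
    (forall x : 'I_n -> rmax R, in_cone v x -> in_halfspace I J a x) /\
    ~ in_halfspace I J a y /\
    is_vertex v (fun k => - a k).
Proof.
move=> Hy.
have yfin := yfin_of Hy.
have [c0 G0] := start_good hp Hy.
have [c [Gc Vc]] := reach_vertex hp yfin G0 (leqnn _).
exists (Aset y c), (~: Aset y c), (fun k => - c k).
split; first by rewrite -setI_eq0 setICr.
split; first by rewrite setUCr.
split; first exact: halfspace_ok.
split; first exact: halfspace_y.
have -> : (fun k => - - c k) = c by apply: functional_extensionality => k; rewrite opprK.
exact: Vc.
Qed.
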